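(* Let $H$ be a complex Hilbert space, let $P \in \mathcal{L}(H)$ be an orthogonal projection satisfying the property $\mathcal{AN}$, and let $\eta > 1/2$ be a real number. Then the operator $T := \eta I - P$ satisfies the property $\mathcal{AN}^*$.
   Context: $\mathcal{L}(H)$ is the space of bounded linear operators on $H$. For a closed subspace $M \neq \{0\}$ of $H$ and $A \in \mathcal{L}(H)$: $A|_M$ satisfies $\mathcal{N}$ if there is $x_0 \in M$ with $\|x_0\|=1$ and $\|Ax_0\| = \sup\{\|Ax\| : x\in M, \|x\|=1\}$; $A|_M$ satisfies $\mathcal{N}^*$ if there is $x_0 \in M$ with $\|x_0\|=1$ and $\|Ax_0\| = \inf\{\|Ax\| : x\in M, \|x\|=1\}$. $A$ satisfies the property $\mathcal{AN}$ (resp. $\mathcal{AN}^*$) if $A|_M$ satisfies $\mathcal{N}$ (resp. $\mathcal{N}^*$) for every closed subspace $M \neq \{0\}$ of $H$. *)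

(* Defs.v *)
From HB Require Import structures.
From mathcomp Require Import all_boot all_order all_algebra.
From mathcomp Require Import complex.
From mathcomp Require Import classical_sets reals.
Set Implicit Arguments.
Unset Strict Implicit.
Unset Printing Implicit Defensive.
Import Order.TTheory GRing.Theory Num.Theory.
Local Open Scope ring_scope.
Local Open Scope classical_set_scope.

Record hilbert (R : realType) (V : lmodType R[i]) := Hilbert {
  inner : V -> V -> R[i];
  inner_linear : forall (a : R[i]) (x1 x2 y : V),
      inner (a *: x1 + x2) y = a * inner x1 y + inner x2 y;
  inner_conj : forall x y : V, inner y x = ((inner x y)^*)%C;
  inner_ge0 : forall x : V, 0 <= inner x x;
  inner_def : forall x : V, inner x x = 0 -> x = 0;
  inner_complete : forall u : nat -> V,
      (forall e : R, 0 < e -> exists N : nat, forall m n : nat,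
          (N <= m)%N -> (N <= n)%N ->
          Num.sqrt (complex.Re (inner (u m - u n) (u m - u n))) < e) ->
      exists l : V, forall e : R, 0 < e -> exists N : nat, forall n : nat,
          (N <= n)%N -> Num.sqrt (complex.Re (inner (u n - l) (u n - l))) < e
}.

Section Hilbert.
Variables (R : realType) (V : lmodType R[i]) (H : hilbert V).

Definition hnorm (x : V) : R := Num.sqrt (complex.Re (inner H x x)).

Definition hconverges (u : nat -> V) (l : V) : Prop :=
  forall e : R, 0 < e -> exists N : nat, forall n : nat,
    (N <= n)%N -> hnorm (u n - l) < e.

Definition bounded_op (A : V -> V) : Prop :=
  (forall (a : R[i]) (x y : V), A (a *: x + y) = a *: A x + A y) /\
  exists c : R, forall x : V, hnorm (A x) <= c * hnorm x.

Definition orth_proj (P : V -> V) : Prop :=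
  bounded_op P /\ (forall x, P (P x) = P x) /\
  (forall x y, inner H (P x) y = inner H x (P y)).

Definition closed_subspace (M : set V) : Prop :=
  M 0 /\ (forall (a : R[i]) x y, M x -> M y -> M (a *: x + y)) /\
  (forall (u : nat -> V) (l : V), (forall n, M (u n)) -> hconverges u l -> M l).

Definition norm_image (A : V -> V) (M : set V) : set R :=
  [set r | exists x, M x /\ hnorm x = 1 /\ r = hnorm (A x)].

Definition satN (A : V -> V) (M : set V) : Prop :=
  exists x0, M x0 /\ hnorm x0 = 1 /\ hnorm (A x0) = sup (norm_image A M).

Definition satNstar (A : V -> V) (M : set V) : Prop :=
  exists x0, M x0 /\ hnorm x0 = 1 /\ hnorm (A x0) = inf (norm_image A M).

Definition propAN (A : V -> V) : Prop :=
  forall M : set V, closed_subspace M -> M <> [set 0] -> satN A M.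

Definition propANstar (A : V -> V) : Prop :=
  forall M : set V, closed_subspace M -> M <> [set 0] -> satNstar A M.

End Hilbert.

(* Main.v *)
Require Import Defs.
From HB Require Import structures.
From mathcomp Require Import all_boot all_order all_algebra.
From mathcomp Require Import complex.
From mathcomp Require Import classical_sets reals.
From mathcomp Require Import ring lra.
Import Order.TTheory GRing.Theory Num.Theory.
Local Open Scope ring_scope.

Section S.
Variables (R : realType) (V : lmodType R[i]) (H : hilbert V).
Local Notation I := (inner H).

Lemma innerD1 x y z : I (x + y) z = I x z + I y z.
Proof. by have := inner_linear H 1 x y z; rewrite scale1r mul1r. Qed.
Lemma inner0l z : I 0 z = 0.
Proof. have := innerD1 0 0 z; rewrite addr0 => h. by rewrite -(subrr (I 0 z)) {2}h addrK. Qed.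
Lemma innerZ1 a x z : I (a *: x) z = a * I x z.
Proof. by rewrite -[a *: x]addr0 inner_linear inner0l addr0. Qed.
Lemma innerB1 x y z : I (x - y) z = I x z - I y z.
Proof. by rewrite innerD1 -scaleN1r innerZ1 mulN1r. Qed.
Lemma innerZ2 a x z : I z (a *: x) = (a^*)%C * I z x.
Proof. rewrite inner_conj innerZ1 [I z x]inner_conj.
case: a => a1 a2; case: (I x z) => b1 b2 /=. apply/eqP; rewrite eq_complex /=.
apply/andP; split; apply/eqP; ring. Qed.
Lemma innerB2 x y z : I z (x - y) = I z x - I z y.
Proof. rewrite inner_conj innerB1 [I z x]inner_conj [I z y]inner_conj.
case: (I x z) => a1 a2; case: (I y z) => b1 b2 /=. apply/eqP; rewrite eq_complex /=.
apply/andP; split; apply/eqP; ring. Qed.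

Lemma keyT (P : V -> V) (e : R) x :
  (forall x, P (P x) = P x) -> (forall x y, I (P x) y = I x (P y)) ->
  complex.Re (I ((e%:C)%C *: x - P x) ((e%:C)%C *: x - P x)) =
  e ^+ 2 * complex.Re (I x x) + (1 - 2 * e) * complex.Re (I (P x) (P x)).
Proof.
move=> PP Ps.
have h1 : I x (P x) = I (P x) (P x) by rewrite Ps PP.
have h2 : I (P x) x = I (P x) (P x) by rewrite -{1}PP Ps.
rewrite !innerB1 !innerZ1 !innerB2 !innerZ2 h1 h2.
case: (I x x) => a1 a2; case: (I (P x) (P x)) => b1 b2 /=. ring.
Qed.
End S.

Lemma Re_inner_ge0 (R : realType) (V : lmodType R[i]) (H : hilbert V) x :
  0 <= complex.Re (inner H x x).
Proof. by have := inner_ge0 H x; rewrite lecE => /andP[]. Qed.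

Lemma hnorm1 (R : realType) (V : lmodType R[i]) (H : hilbert V) x :
  hnorm H x = 1 -> complex.Re (inner H x x) = 1.
Proof. rewrite /hnorm => h. by rewrite -(sqr_sqrtr (@Re_inner_ge0 _ _ H x)) h expr1n. Qed.

Theorem proposition3p12 (R : realType) (V : lmodType R[i]) (H : hilbert V)
  (P : V -> V) (eta : R) :
  orth_proj H P -> propAN H P -> 1 / 2 < eta ->
  propANstar H (fun x : V => (eta%:C)%C *: x - P x).
Proof.
move=> [[_ [c Pc]] [PP Ps]] AN heta M cM Mne.
have [x0 [Mx0 [n0 e0]]] := AN M cM Mne.
have ub : has_ubound (norm_image H P M).
  exists c => r [x [_ [nx ->]]]. by have := Pc x; rewrite nx mulr1.
have le0 : forall x, M x -> hnorm H x = 1 -> hnorm H (P x) <= hnorm H (P x0).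
  move=> x Mx nx; rewrite e0; apply: ub_le_sup => //; by exists x.
have key : forall x, M x -> hnorm H x = 1 ->
    hnorm H ((eta%:C)%C *: x0 - P x0) <= hnorm H ((eta%:C)%C *: x - P x).
  move=> x Mx nx; have := le0 x Mx nx.
  rewrite /hnorm !keyT // (hnorm1 _ _ _ _ n0) (hnorm1 _ _ _ _ nx) ler_sqrt ?Re_inner_ge0 // => hb.
  apply: ler_wsqrtr. rewrite !mulr1 lerD2l. nra.
exists x0; split => //; split => //.
apply/eqP; rewrite eq_le; apply/andP; split.
  apply: lb_le_inf.
    by exists (hnorm H ((eta%:C)%C *: x0 - P x0)), x0.
  by move=> r [x [Mx [nx ->]]]; apply: key.
apply: ge_inf.
  by exists 0 => r [x [_ [_ ->]]]; apply: sqrtr_ge0.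
by exists x0.
Qed.
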